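(* Let $x\in\mathcal{X}^+$ be a positive excursion. Then the set $\{x'\in\mathcal{X}^+:N(x')=N(x)\}$ equals the set of all excursions $x^r$, $r\ge1$, obtained as $x^r=\mathcal{E}_r\circ\cdots\circ\mathcal{E}_1(x)$ where each $\mathcal{E}_k$ is a shift of an excursion defined at $\mathcal{E}_{k-1}\circ\cdots\circ\mathcal{E}_1(x)$ (i.e. $x^0=x$ and $x^k=\mathcal{E}_k(x^{k-1})$ with $x^{k-1}$ in the domain of $\mathcal{E}_k$).
   Context: A positive excursion is a finite sequence $x=(x_n:0\le n\le\theta)$ of integers with $x_0=x_\theta=0$, $x_n>0$ for $0<n<\theta$, and jumps $y_n=x_{n+1}-x_n\in\{1,-1\}$; $\theta=\theta(x)$ is its length, $H(x)=\max_n x_n$ its height, and $\mathcal{X}^+$ is the set of positive excursions. The level numbers of $x$ are $N(x)=(N_h(x):h\ge0)$ with $N_h(x)=|\{n\in[0,\theta):y_n=1,\ x_n=h\}|$. Shift of an excursion: given integers $a<b$, $c$ and $h\ge1$, the shift $\mathcal{E}=\mathcal{E}\{a,b,c;h\}$ is defined at $x\in\mathcal{X}^+$ when $0\le a,b,c\le\theta(x)$, $h\le H(x)-1$, $x_a=x_b=x_c=h$, $x_n>h$ for all $a<n<b$ (so $x[a,b]$ shifted by $-h$ is a positive excursion), and $c\notin(a,b)$. Then $\mathcal{E}(x)$ is the path of the same length obtained by moving the segment $x[a,b]$ to position $c$: if $b\le c$: $\mathcal{E}(x)_n=x_n$ for $n<a$ or $n\ge c$; $\mathcal{E}(x)_{a+k}=x_{b+k}$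 for $0\le k\le c-b$; $\mathcal{E}(x)_{c-(b-a)+k}=x_{a+k}$ for $0\le k<b-a$. If $c\le a$: $\mathcal{E}(x)_n=x_n$ for $n\le c$ or $n>b$; $\mathcal{E}(x)_{c+k}=x_{a+k}$ for $0< k\le b-a$; $\mathcal{E}(x)_{c+(b-a)+k}=x_{c+k}$ for $0\le k\le a-c$. (That is, the two adjacent path segments $x[a,b],x[b,c]$, respectively $x[c,a],x[a,b]$, all with endpoints at level $h$, are interchanged.) $\mathcal{E}(x)$ is again a positive excursion. *)

(* Defs.v *)
From mathcomp Require Import all_boot all_order all_algebra.
Set Implicit Arguments. Unset Strict Implicit. Unset Printing Implicit Defensive.
Import Order.TTheory GRing.Theory Num.Theory.
Local Open Scope ring_scope.

(* A path x = (x_0, ..., x_theta) is represented by the sequence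
   [:: x_0; ...; x_theta] of integers (so size x = theta + 1). *)
Definition lpath := seq int.

Definition theta (x : lpath) : nat := (size x).-1.
Definition xv (x : lpath) (n : nat) : int := nth 0 x n.

Definition pos_exc (x : lpath) : Prop :=
  [/\ (0 < size x)%N, xv x 0 = 0, xv x (theta x) = 0,
      (forall n : nat, (0 < n < theta x)%N -> 0 < xv x n) &
      (forall n : nat, (n < theta x)%N ->
         xv x n.+1 - xv x n = 1 \/ xv x n.+1 - xv x n = -1)].

(* height H(x) = max_n x_n (x_0 = 0, so starting the fold at 0 is harmless) *)
Definition height (x : lpath) : int := foldr Num.max 0 x.

Definition level_number (x : lpath) (h : nat) : nat :=
  count (fun n => (xv x n.+1 - xv x n == 1) && (xv x n == h%:Z)) (iota 0 (theta x)).

Definition shift_defined (a b c : nat) (h : int) (x : lpath) : Prop :=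
  [/\ [/\ (a < b)%N, (b <= theta x)%N & (c <= theta x)%N],
      1 <= h /\ h <= height x - 1,
      [/\ xv x a = h, xv x b = h & xv x c = h],
      (forall n : nat, (a < n < b)%N -> h < xv x n) &
      ~~ (a < c < b)%N].

Definition shift (a b c : nat) (x : lpath) : lpath :=
  mkseq (fun n =>
    if (b <= c)%N then
      if (n < a)%N || (c <= n)%N then xv x n
      else if (n <= a + (c - b))%N then xv x (b + (n - a))
      else xv x (a + (n - (c - (b - a))))
    else
      if (n <= c)%N || (b < n)%N then xv x n
      else if (n <= c + (b - a))%N then xv x (a + (n - c))
      else xv x (c + (n - (c + (b - a)))))
    (size x).

Definition shift_step (x y : lpath) : Prop :=
  exists a b c : nat, exists h : int,
    shift_defined a b c h x /\ y = shift a b c x.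

Definition shift_reachable (x y : lpath) : Prop :=
  exists r : nat, exists X : nat -> lpath,
    [/\ X 0%N = x, X r = y &
        forall k : nat, (0 < k <= r)%N -> shift_step (X k.-1) (X k)].

(* Main.v *)
Require Import Defs.
From mathcomp Require Import all_boot all_order all_algebra zify.
Import Order.TTheory GRing.Theory Num.Theory.
Set Implicit Arguments. Unset Strict Implicit. Unset Printing Implicit Defensive.

Definition tau (a b c n : nat) : nat :=
  if (b <= c)%N then
    if (n < a)%N then n else if (n < a + (c - b))%N then b + (n - a)
    else if (n < c)%N then a + (n - (a + (c - b))) else n
  else
    if (n < c)%N then n else if (n < c + (b - a))%N then a + (n - c)
    else if (n < b)%N then c + (n - (c + (b - a))) else n.

Lemma size_theta (x : lpath) : (0 < size x)%N -> size x = (theta x).+1.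
Proof. by rewrite /theta; case: x. Qed.

Lemma shift_vals x a b c h : shift_defined a b c h x ->
  forall n, (n < theta x)%N ->
  xv (shift a b c x) n = xv x (tau a b c n) /\
  xv (shift a b c x) n.+1 = xv x (tau a b c n).+1.
Proof.
case=> [[Hab Hb Hc] _ [Ha Hb' Hc'] _ Hnc] n Hn.
have Hs0 : (0 < size x)%N by move: Hb; rewrite /theta; case: (size x) => //= ; lia.
have Hs : size x = (theta x).+1 by apply: size_theta.
have Bnd : forall i j, (i = a \/ i = b \/ i = c) -> (j = a \/ j = b \/ j = c) ->
   xv x i = xv x j.
  move=> i j [->|[->|->]] [->|[->|->]]; congruence.
rewrite /xv /shift !nth_mkseq; try lia.
rewrite -!/(xv x _) /tau.
case: leqP => Hbc; split; repeat case: ifP => ?;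
  first [ by congr (xv x _); lia | by apply: Bnd; lia ].
Qed.

Lemma tau_perm a b c t : (a < b)%N -> (b <= t)%N -> (c <= t)%N -> ~~ (a < c < b)%N ->
  perm_eq (map (tau a b c) (iota 0 t)) (iota 0 t).
Proof.
move=> Hab Hb Hc Hnc.
have Hu : uniq (map (tau a b c) (iota 0 t)).
  rewrite map_inj_in_uniq ?iota_uniq //.
  move=> i j; rewrite !mem_iota /tau => Hi Hj.
  case: leqP => ?; repeat case: ifP => ?; lia.
have Hsub : {subset map (tau a b c) (iota 0 t) <= iota 0 t}.
  move=> y /mapP [i]; rewrite !mem_iota /tau => Hi ->.
  case: leqP => ?; repeat case: ifP => ?; lia.
have [_ Heq] := uniq_min_size Hu Hsub (eq_leq (esym (size_map _ _))).
by apply: uniq_perm => //; apply: iota_uniq.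
Qed.

Lemma pos_exc_steps x : pos_exc x -> forall n, (n < theta x)%N ->
  xv x n.+1 = (xv x n + 1)%R \/ xv x n.+1 = (xv x n - 1)%R.
Proof. case=> _ _ _ _ H n Hn; case: (H n Hn); lia. Qed.

Lemma shift_preserves x a b c h : pos_exc x -> shift_defined a b c h x ->
  [/\ pos_exc (shift a b c x), theta (shift a b c x) = theta x &
     forall k, level_number (shift a b c x) k = level_number x k].
Proof.
move=> Hx Hd.
have V := shift_vals Hd.
case: Hx => Hs0 H0 Ht Hpos Hst.
case: Hd => [[Hab Hb Hc] [H1 H2] [Ha Hb' Hc'] Hin Hnc].
have Ht' : theta (shift a b c x) = theta x by rewrite /theta size_mkseq.
have Ha0 : a <> 0%N by move=> E; move: Ha; rewrite E H0; lia.
have Hc0 : c <> 0%N by move=> E; move: Hc'; rewrite E H0; lia.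
have Hbt : b <> theta x by move=> E; move: Hb'; rewrite E Ht; lia.
have Hct : c <> theta x by move=> E; move: Hc'; rewrite E Ht; lia.
split => //; last first.
  move=> k; rewrite /level_number Ht'.
  rewrite (@eq_in_count _ _ (fun n => ((xv x (tau a b c n).+1 - xv x (tau a b c n) == 1)
        && (xv x (tau a b c n) == Posz k))%R)); last first.
    by move=> n; rewrite mem_iota => Hn; case: (V n) => [|-> ->] //; lia.
  rewrite -(count_map (tau a b c) (fun n => ((xv x n.+1 - xv x n == 1) && (xv x n == Posz k))%R)).
  by apply/permP/tau_perm.
split.
- by rewrite size_mkseq.
- case: (V 0%N) => [|-> _]; first lia.
  by rewrite /tau; case: (leqP b c) => ?; repeat case: ifP => ?; (try lia); rewrite H0.
- have Ht1 : theta x = (theta x).-1.+1 by lia.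
  rewrite Ht' Ht1; case: (V (theta x).-1) => [|_ ->]; first lia.
  rewrite -Ht; congr (xv x _).
  by rewrite /tau; case: (leqP b c) => ?; repeat case: ifP => ?; lia.
- move=> n; rewrite Ht' => Hn; case: (V n) => [|-> _]; first lia.
  apply: Hpos.
  rewrite /tau; case: (leqP b c) => ?; repeat case: ifP => ?; lia.
- move=> n; rewrite Ht' => Hn; case: (V n) => [|-> ->]; first lia.
  apply: Hst.
  by rewrite /tau; case: (leqP b c) => ?; repeat case: ifP => ?; lia.
Qed.

Lemma height_ge x i : (xv x i <= height x)%R.
Proof.
rewrite /xv /height.
elim: x i => [|a l IH] [|i] //=; rewrite le_max ?lexx //.
by rewrite IH orbT.
Qed.

Definition steps (x : lpath) (i k : nat) :=
  forall n, (i <= n < k)%N -> xv x n.+1 = (xv x n + 1)%R \/ xv x n.+1 = (xv x n - 1)%R.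

Lemma ivt_down x (v : int) i k : (i <= k)%N -> steps x i k ->
  (v <= xv x i)%R -> (xv x k < v)%R ->
  exists j, [/\ (i <= j < k)%N, xv x j = v, xv x j.+1 = (v - 1)%R &
     forall l, (i <= l <= j)%N -> (v <= xv x l)%R].
Proof.
move=> Hik Hs.
have [d Hd] : exists d, k - i = d by eexists.
elim: d i Hd Hik Hs => [|d IH] i Hd Hik Hs Hv Hk.
  have E : i = k by lia.
  by subst; lia.
have Hi : (i < k)%N by lia.
case: (Hs i) => [|Hst|Hst]; first lia.
- have [|||||j [Hj1 Hj2 Hj3 Hj4]] := IH i.+1; try lia.
    by move=> n Hn; apply: Hs; lia.
  exists j; split => //; first lia.
  move=> l Hl; case: (ltnP i l) => Hil; first by apply: Hj4; lia.
  by have -> : l = i by lia.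
- case: (ltP (xv x i.+1) v) => Hlt.
    exists i; split; try lia.
    by move=> l Hl; have -> : l = i by lia.
  have [|||||j [Hj1 Hj2 Hj3 Hj4]] := IH i.+1; try lia.
    by move=> n Hn; apply: Hs; lia.
  exists j; split => //; first lia.
  move=> l Hl; case: (ltnP i l) => Hil; first by apply: Hj4; lia.
  by have -> : l = i by lia.
Qed.

Lemma ivt_up x (v : int) i k : (i <= k)%N -> steps x i k ->
  (xv x i < v)%R -> (v <= xv x k)%R ->
  exists j, [/\ (i <= j < k)%N, xv x j = (v - 1)%R & xv x j.+1 = v].
Proof.
move=> Hik Hs.
have [d Hd] : exists d, k - i = d by eexists.
elim: d i Hd Hik Hs => [|d IH] i Hd Hik Hs Hv Hk.
  have E : i = k by lia.
  by subst; lia.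
have Hi : (i < k)%N by lia.
case: (ltP (xv x i.+1) v) => Hlt.
  have [|||||j [Hj1 Hj2 Hj3]] := IH i.+1; try lia.
    by move=> n Hn; apply: Hs; lia.
  by exists j; split => //; lia.
case: (Hs i) => [|Hst|Hst]; first lia.
- by exists i; split; lia.
- lia.
Qed.

Lemma pos_steps x : pos_exc x -> steps x 0 (theta x).
Proof. case=> _ _ _ _ H n Hn; case: (H n); lia. Qed.

Definition up (x : lpath) (h : nat) (n : nat) : bool :=
  ((xv x n.+1 - xv x n == 1) && (xv x n == Posz h))%R.

Definition agree (n : nat) (x y : lpath) := forall i, (i <= n)%N -> xv x i = xv y i.

Lemma level_split x h n : (n <= theta x)%N ->
  level_number x h = (count (up x h) (iota 0 n) + count (up x h) (iota n (theta x - n)))%N.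
Proof.
move=> Hn; rewrite /level_number -count_cat -iotaD.
by rewrite (_ : (n + (theta x - n))%N = theta x) //; lia.
Qed.

Lemma suffix_has x y h n m : (n <= theta x)%N -> (n <= theta y)%N -> agree n x y ->
  level_number x h = level_number y h ->
  (n <= m < theta y)%N -> up y h m ->
  exists2 m', (n <= m' < theta x)%N & up x h m'.
Proof.
move=> Hx Hy Ha Hl Hm Hu.
have Hp : count (up x h) (iota 0 n) = count (up y h) (iota 0 n).
  apply: eq_in_count => i; rewrite mem_iota => Hi.
  by rewrite /up !Ha //; lia.
move: Hl; rewrite (level_split h Hx) (level_split h Hy) Hp => /addnI Hs.
have : has (up y h) (iota n (theta y - n)).
  by apply/hasP; exists m => //; rewrite mem_iota; lia.
rewrite has_count -Hs -has_count => /hasP [m' Hm' Hu'].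
by exists m' => //; move: Hm'; rewrite mem_iota; lia.
Qed.

Lemma end_eq y z n : pos_exc y -> pos_exc z ->
  (forall h, level_number y h = level_number z h) -> agree n y z ->
  n = theta y -> (n <= theta z)%N -> y = z.
Proof.
move=> Hy Hz Hl Ha Hn Hnz.
have Ht : theta z = n.
  case: (ltnP n (theta z)) => H; last lia.
  exfalso.
  case: Hy => Hy0 Hy1 Hy2 Hy3 Hy4; case: Hz => Hz0 Hz1 Hz2 Hz3 Hz4.
  case: (posnP n) => Hn0.
  - rewrite {}Hn0 in Hn Ha H Hnz.
    have L0 : level_number y 0 = 0%N by rewrite /level_number -Hn.
    have Hz1' : xv z 1 = 1%R.
      case: (Hz4 0%N) => //; rewrite Hz1 => E.
      + lia.
      + case: (ltnP 1 (theta z)) => H1.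
          by have := Hz3 1%N; lia.
        have E1 : theta z = 1%N by lia.
        by move: Hz2; rewrite E1; lia.
    have : (0 < level_number z 0)%N.
      rewrite /level_number -has_count; apply/hasP; exists 0%N.
        by rewrite mem_iota; lia.
      by rewrite Hz1 Hz1'.
    by rewrite -Hl L0.
  - have := Hz3 n; rewrite -Ha // Hn Hy2; lia.
have Hs : size y = size z.
  case: Hy => Hy0 _ _ _ _; case: Hz => Hz0 _ _ _ _.
  by rewrite (size_theta Hy0) (size_theta Hz0) -Hn Ht.
apply: (eq_from_nth (x0 := 0%R)) => // i Hi.
have := Ha i; rewrite /xv => -> //.
case: Hy => Hy0 _ _ _ _; move: Hi; rewrite (size_theta Hy0); lia.
Qed.

Lemma reach_refl x : shift_reachable x x.
Proof. by exists 0%N, (fun _ => x); split => // k; lia. Qed.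

Lemma reach_cons x y z : shift_step x y -> shift_reachable y z -> shift_reachable x z.
Proof.
move=> Hs [r [X [H0 Hr Hk]]].
exists r.+1, (fun k => if k is k'.+1 then X k' else x); split => //.
case=> [|k] Hk'; first lia.
case: k Hk' => [|k] Hk' /=; first by rewrite H0.
by apply: (Hk k.+1); lia.
Qed.

Lemma sh_id x a b c n : (n < size x)%N ->
  ((b <= c)%N && ((n < a)%N || (c <= n)%N)) || (~~ (b <= c)%N && ((n <= c)%N || (b < n)%N)) ->
  xv (shift a b c x) n = xv x n.
Proof.
move=> Hn H; rewrite /xv /shift nth_mkseq // -!/(xv x _).
by repeat (case: ifP => ?); first [done | lia].
Qed.

Lemma sh_1 x a b c n : (a < b)%N -> (n < size x)%N -> (b <= c)%N -> (a <= n <= a + (c - b))%N ->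
  xv (shift a b c x) n = xv x (b + (n - a)).
Proof.
move=> H0 Hn H1 H2; rewrite /xv /shift nth_mkseq // -!/(xv x _).
by repeat (case: ifP => ?); first [done | lia].
Qed.

Lemma sh_2 x a b c n : (c <= a)%N -> (n < size x)%N -> (c < b)%N -> (c < n <= c + (b - a))%N ->
  xv (shift a b c x) n = xv x (a + (n - c)).
Proof.
move=> H0 Hn H1 H2; rewrite /xv /shift nth_mkseq // -!/(xv x _).
by repeat (case: ifP => ?); first [done | lia].
Qed.

Lemma steps_sub x i k : pos_exc x -> (k <= theta x)%N -> steps x i k.
Proof. by move=> /pos_steps H Hk n Hn; apply: H; lia. Qed.

Lemma pos_size x : pos_exc x -> size x = (theta x).+1.
Proof. by case=> H _ _ _ _; apply: size_theta. Qed.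

Lemma case1 x x' n hn : pos_exc x -> pos_exc x' ->
  (forall h, level_number x h = level_number x' h) -> agree n x x' ->
  (n < theta x)%N -> (n < theta x')%N -> xv x n = Posz hn -> (0 < hn)%N ->
  xv x n.+1 = (Posz hn - 1)%R -> xv x' n.+1 = (Posz hn + 1)%R ->
  exists y, shift_step x y /\ agree n.+1 y x'.
Proof.
move=> Hx Hx' Hl Ha Hn Hn' Hxn Hh Hd Hu.
have Hx'n : xv x' n = Posz hn by rewrite -Ha.
have Hu' : up x' hn n by rewrite /up Hu Hx'n; apply/andP; split; apply/eqP; lia.
have Ha' : agree n x' x by move=> i Hi; rewrite Ha.
have [m Hm Hum] := suffix_has (ltnW Hn) (ltnW Hn') Ha (Hl hn) (n:=n) (m:=n)
   (ltac:(lia)) Hu'.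
move: Hum; rewrite /up => /andP [/eqP E1 /eqP E2].
have Hmn : m <> n by move=> E; move: E1 E2; rewrite E Hd Hxn; lia.
have Hs := pos_size Hx.
case: (Hx) => _ _ Ht _ _.
have [e [He1 He2 He3 He4]] := @ivt_down x (Posz hn + 1)%R m.+1 (theta x)
  ltac:(lia) (steps_sub Hx (leqnn _)) ltac:(lia) ltac:(lia).
exists (shift m e.+1 n x); split.
  exists m, e.+1, n, (Posz hn); split => //.
  split; [split; lia | split; [lia | have := height_ge x m.+1; lia] | split; lia
         | move=> l Hl'; have := He4 l; lia | lia].
move=> i Hi; case: (ltnP n i) => Hin.
  have -> : i = n.+1 by lia.
  rewrite sh_2; try lia.
  rewrite (_ : (m + (n.+1 - n))%N = m.+1); last lia.
  by rewrite Hu; lia.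
rewrite sh_id; try lia.
by apply: Ha.
Qed.

Lemma case2 x x' n hn j : pos_exc x -> pos_exc x' ->
  (forall h, level_number x h = level_number x' h) -> agree n x x' ->
  (n < theta x)%N -> (n < theta x')%N -> xv x n = Posz hn -> (0 < hn)%N ->
  xv x n.+1 = (Posz hn + 1)%R -> xv x' n.+1 = (Posz hn - 1)%R ->
  (n <= j)%N -> xv x j = Posz hn -> xv x j.+1 = (Posz hn - 1)%R ->
  exists y j', [/\ shift_step x y, agree n y x', (n <= j' < j)%N,
     xv y j' = Posz hn & xv y j'.+1 = (Posz hn - 1)%R].
Proof.
move=> Hx Hx' Hl Ha Hn Hn' Hxn Hh Hu Hd Hj1 Hj2 Hj3.
have Hx'n : xv x' n = Posz hn by rewrite -Ha.
have Hs := pos_size Hx.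
case: (Hx) => _ _ Ht _ _.
have [j0 [H01 H02 H03 H04]] := @ivt_down x (Posz hn) n (theta x)
  ltac:(lia) (steps_sub Hx (leqnn _)) ltac:(lia) ltac:(lia).
have Hjj : (j0 <= j)%N.
  case: (ltnP j j0) => // H; have := H04 j.+1; lia.
have [e [He1 He2 He3 He4]] := @ivt_down x (Posz hn + 1)%R n.+1 (theta x)
  ltac:(lia) (steps_sub Hx (leqnn _)) ltac:(lia) ltac:(lia).
have Hej : (e < j0)%N.
  case: (ltnP e j0) => // H.
  have Hj0n : j0 <> n by move=> E; move: H03; rewrite E Hu; lia.
  have := He4 j0; lia.
have Hux : up x hn n by rewrite /up Hu Hxn; apply/andP; split; apply/eqP; lia.
have Ha' : agree n x' x by move=> i Hi; rewrite Ha.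
have Hl' : forall h, level_number x' h = level_number x h by move=> h; rewrite Hl.
have [m Hm Hum] := suffix_has (ltnW Hn') (ltnW Hn) Ha' (Hl' hn) (n:=n) (m:=n)
   (ltac:(lia)) Hux.
move: Hum; rewrite /up => /andP [/eqP E1 /eqP E2].
have Hmn : m <> n by move=> E; move: E1 E2; rewrite E Hd Hx'n; lia.
have [q' [Hq1 Hq2 Hq3]] := @ivt_up x' (Posz hn) n.+1 m
  ltac:(lia) (steps_sub Hx' (ltnW (proj2 (andP Hm)))) ltac:(lia) ltac:(lia).
have Huq' : up x' hn.-1 q' by rewrite /up; apply/andP; split; apply/eqP; lia.
have [q Hq Huq] := suffix_has (ltnW Hn) (ltnW Hn') Ha (Hl hn.-1) (n:=n) (m:=q')
   (ltac:(lia)) Huq'.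
move: Huq; rewrite /up => /andP [/eqP F1 /eqP F2].
have Hqj : (j0 < q)%N.
  case: (ltnP j0 q) => // H; have := H04 q; lia.
exists (shift n e.+1 q.+1 x), (n + (j0 - e.+1))%N; split.
- exists n, e.+1, q.+1, (Posz hn); split => //.
  split; [split; lia | split; [lia | have := height_ge x n.+1; lia] | split; lia
         | move=> l Hl0; have := He4 l; lia | lia].
- move=> i Hi; case: (ltnP i n) => Hin.
    by rewrite sh_id; try lia; apply: Ha; lia.
  have -> : i = n by lia.
  rewrite sh_1; try lia.
  rewrite (_ : (e.+1 + (n - n))%N = e.+1); last lia.
  by rewrite He3 Hx'n; lia.
- lia.
- rewrite sh_1; try lia.
  by rewrite (_ : (e.+1 + (n + (j0 - e.+1) - n))%N = j0); [lia | lia].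
- rewrite sh_1; try lia.
  by rewrite (_ : (e.+1 + ((n + (j0 - e.+1)).+1 - n))%N = j0.+1); [lia | lia].
Qed.

Lemma step_preserves x y : pos_exc x -> shift_step x y ->
  [/\ pos_exc y, theta y = theta x & forall k, level_number y k = level_number x k].
Proof. by move=> Hx [a [b [c [h [Hd ->]]]]]; apply: shift_preserves Hd. Qed.

Lemma first_up x : pos_exc x -> (0 < theta x)%N -> xv x 1 = 1%R.
Proof.
case=> _ H0 Ht Hp Hs Hn.
case: (Hs 0%N) => //; rewrite H0 => E.
- lia.
- case: (ltnP 1 (theta x)) => H1.
    by have := Hp 1%N; lia.
  have E1 : theta x = 1%N by lia.
  by move: Ht; rewrite E1; lia.
Qed.

Lemma main x' : pos_exc x' -> forall d n x, pos_exc x ->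
  (forall h, level_number x h = level_number x' h) -> agree n x x' ->
  (n <= theta x)%N -> (n <= theta x')%N -> (theta x <= n + d)%N ->
  shift_reachable x x'.
Proof.
move=> Hx'; elim=> [|d IH] n x Hx Hl Ha Hn Hn' Hd.
  have E : x = x' by apply: (end_eq Hx Hx' Hl Ha); lia.
  by rewrite E; apply: reach_refl.
case: (ltnP n (theta x)) => Hnx; last first.
  have E : x = x' by apply: (end_eq Hx Hx' Hl Ha); lia.
  by rewrite E; apply: reach_refl.
case: (ltnP n (theta x')) => Hnx'; last first.
  have E : x' = x.
    apply: (end_eq Hx' Hx _ _ (n := n)); try lia.
    - by move=> h; rewrite Hl.
    - by move=> i Hi; rewrite Ha.
  by rewrite E; apply: reach_refl.
have [hn Hhn] : exists hn, xv x' n = Posz hn.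
  case: (posnP n) => Hn0.
    by exists 0%N; case: Hx' => _ H0 _ _ _; rewrite Hn0 H0.
  case: Hx' => _ _ _ Hp _; have := Hp n; case: (xv x' n) => [k|k].
    by exists k.
  lia.
have Hst' := pos_steps Hx' Hnx'.
suff inner : forall k y, pos_exc y ->
  (forall h, level_number y h = level_number x' h) -> agree n y x' ->
  theta y = theta x ->
  ((0 < hn)%N -> exists j, [/\ (n <= j < n + k)%N, xv y j = Posz hn & xv y j.+1 = (Posz hn - 1)%R]) ->
  shift_reachable y x'.
  apply: (inner (theta x)) => //.
  move=> Hh.
  have Hxn : xv x n = Posz hn by rewrite Ha.
  case: (Hx) => _ _ Ht _ _.
  have [j [Hj1 Hj2 Hj3 _]] := @ivt_down x (Posz hn) n (theta x)
    ltac:(lia) (steps_sub Hx (leqnn _)) ltac:(lia) ltac:(lia).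
  by exists j; split => //; lia.
elim/ltn_ind => k IHk y Hy Hly Hay Hty Hj.
have Hyn : xv y n = Posz hn by rewrite Hay.
have Hny : (n < theta y)%N by rewrite Hty.
have Hsty := pos_steps Hy Hny.
case: (boolP (xv y n.+1 == xv x' n.+1)) => [/eqP Heq|Hne].
  apply: (IH n.+1) => //; try lia.
  move=> i Hi; case: (ltnP n i) => Hin; last by apply: Hay.
  by have -> : i = n.+1 by lia.
have Hn0 : (0 < n)%N.
  case: (posnP n) => // E; move: Hne; rewrite E.
  by rewrite (first_up Hy) ?(first_up Hx') //; lia.
have Hh : (0 < hn)%N by case: Hx' => _ _ _ Hp _; have := Hp n; lia.
case: Hsty => Ey; case: Hst' => Ex'; try (by move: Hne; rewrite Ey Ex' Hay ?eqxx; lia).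
- (* y up, x' down *)
  have [j [Hj1 Hj2 Hj3]] := Hj Hh.
  have [z [j' [Hs Haz Hj' Hz1 Hz2]]] := case2 Hy Hx' Hly Hay Hny Hnx' Hyn Hh
     ltac:(lia) ltac:(lia) (proj1 (andP Hj1)) Hj2 Hj3.
  have [Hz Htz Hlz] := step_preserves Hy Hs.
  apply: reach_cons Hs _.
  have Hk0 : (0 < k)%N by lia.
  apply: (IHk k.-1 _ z Hz) => //; first lia.
  - by move=> h; rewrite Hlz Hly.
  - by rewrite Htz.
  - by move=> _; exists j'; split => //; lia.
- (* y down, x' up *)
  have [z [Hs Haz]] := case1 Hy Hx' Hly Hay Hny Hnx' Hyn Hh ltac:(lia) ltac:(lia).
  have [Hz Htz Hlz] := step_preserves Hy Hs.
  apply: reach_cons Hs _.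
  apply: (IH n.+1) => //; try lia.
  by move=> h; rewrite Hlz Hly.
Qed.

Theorem proposition3 (x : lpath) : pos_exc x ->
  forall x' : lpath,
    (pos_exc x' /\ (forall h : nat, level_number x' h = level_number x h))
    <-> shift_reachable x x'.
Proof.
move=> Hx x'; split.
  case=> Hx' Hl.
  apply: (main Hx' (d := theta x) (n := 0%N)) => //; try lia.
  - move=> i Hi; have -> : i = 0%N by lia.
    by case: Hx => _ -> _ _ _; case: Hx' => _ -> _ _ _.
case=> r [X [H0 Hr Hk]].
suff : forall k, (k <= r)%N -> pos_exc (X k) /\ forall h, level_number (X k) h = level_number x h.
  by rewrite -Hr; apply.
elim=> [|k IHk] Hkr; first by rewrite H0.
have [Hp Hl] := IHk (ltnW Hkr).
have [Hp' _ Hl'] := step_preserves Hp (Hk k.+1 ltac:(lia)).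
by split => // h; rewrite Hl' Hl.
Qed.
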